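(* Let $X$ be an $R$-module with $\mathrm{Hom}_R(M,X)\neq0$. If $X$ is an $M$-prime module, then $X$ is a Beachy-$M$-prime module.
   Context: $R$ is a ring with identity, modules are unital left $R$-modules, $M$ is a fixed left $R$-module. $\mathrm{Ann}_M(X):=\bigcap_{f\in\mathrm{Hom}_R(M,X)}\ker f$. For $N\le M$ and a module $X$, $N\cdot X$ is the intersection of the kernels of all homomorphisms $X\to W$ where $W$ ranges over modules with $f(N)=0$ for all $f\in\mathrm{Hom}_R(M,W)$ (for $Y\le X$, $N\cdot Y$ is formed regarding $Y$ as a module). A proper submodule $P$ of $X$ is $M$-prime if for all $N\le M$, $Y\le X$, $N\cdot Y\subseteq P$ implies $N\cdot X\subseteq P$ or $Y\subseteq P$; $X$ is an $M$-prime module if $X\ne0$ and $(0)$ is an $M$-prime submodule. A module $X$ is Beachy-$M$-prime if $\mathrm{Hom}_R(M,X)\neq0$ and $\mathrm{Ann}_M(Y)=\mathrm{Ann}_M(X)$ for all submodules $Y\le X$ with $\mathrm{Hom}_R(M,Y)\neq0$. *)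

(* Defs.v *)
From HB Require Import structures.
From mathcomp Require Import all_boot all_algebra.
Set Implicit Arguments. Unset Strict Implicit. Unset Printing Implicit Defensive.
Import GRing.Theory.
Local Open Scope ring_scope.

Section ModuleDefs.
Variable R : pzRingType.

Definition is_submod (X : lmodType R) (Y : X -> Prop) : Prop :=
  Y 0 /\ (forall (a : R) (x y : X), Y x -> Y y -> Y (a *: x + y)).

(* A function g : X -> W whose restriction to the submodule Y is an
   R-module homomorphism Y -> W (values outside Y are irrelevant);
   this represents Hom_R(Y, W) with Y regarded as a module. *)
Definition hom_on (X W : lmodType R) (Y : X -> Prop) (g : X -> W) : Prop :=
  forall (a : R) (x y : X), Y x -> Y y -> g (a *: x + y) = a *: g x + g y.

Definition fullsub (X : lmodType R) : X -> Prop := fun _ => True.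

(* N . Y : intersection of kernels of all homomorphisms Y -> W, where W ranges
   over modules such that f(N) = 0 for every f in Hom_R(M, W). *)
Definition mdot (M : lmodType R) (N : M -> Prop) (X : lmodType R)
    (Y : X -> Prop) : X -> Prop :=
  fun x => Y x /\
    forall (W : lmodType R) (g : X -> W),
      hom_on Y g ->
      (forall (f : {linear M -> W}) (n : M), N n -> f n = 0) ->
      g x = 0.

Definition M_prime_submod (M X : lmodType R) (P : X -> Prop) : Prop :=
  is_submod P /\ (exists x : X, ~ P x) /\
  forall (N : M -> Prop) (Y : X -> Prop),
    is_submod N -> is_submod Y ->
    (forall x, mdot N Y x -> P x) ->
    (forall x, mdot N (@fullsub X) x -> P x) \/ (forall x, Y x -> P x).

Definition M_prime_module (M X : lmodType R) : Prop :=
  (exists x : X, x <> 0) /\ M_prime_submod M (fun x : X => x = 0).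

Definition hom_nonzero_into (M X : lmodType R) (Y : X -> Prop) : Prop :=
  exists f : {linear M -> X}, (forall m, Y (f m)) /\ exists m, f m <> 0.

Definition AnnM (M X : lmodType R) (Y : X -> Prop) : M -> Prop :=
  fun m => forall f : {linear M -> X}, (forall m', Y (f m')) -> f m = 0.

Definition beachy_M_prime (M X : lmodType R) : Prop :=
  hom_nonzero_into M (@fullsub X) /\
  forall Y : X -> Prop, is_submod Y -> hom_nonzero_into M Y ->
    forall m : M, AnnM Y m <-> AnnM (@fullsub X) m.

End ModuleDefs.

(* Main.v *)
Require Import Defs.
From HB Require Import structures.
From mathcomp Require Import all_boot all_algebra.
From mathcomp Require Import boolp.
Import GRing.Theory.
Local Open Scope ring_scope.

Section Sub.
Variables (R : pzRingType) (X : lmodType R) (Y : X -> Prop) (HY : is_submod Y).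
Definition Yb (x : X) : bool := let _ := HY in `[< Y x >].
Lemma Yb_closed : subsemimod_closed Yb.
Proof.
case: HY => H0 HD; split; first split.
- by apply/asboolP.
- move=> x y /asboolP Hx /asboolP Hy; apply/asboolP.
  by have := HD 1 x y Hx Hy; rewrite scale1r.
- move=> a x /asboolP Hx; apply/asboolP.
  by have := HD a x 0 Hx H0; rewrite addr0.
Qed.
HB.instance Definition _ := GRing.isSubmodClosed.Build R X Yb Yb_closed.
Record Ysub := YS {yval : X; yP : Yb yval}.
HB.instance Definition _ := [isSub for yval].
HB.instance Definition _ := [Choice of Ysub by <:].
HB.instance Definition _ := [SubChoice_isSubLmodule of Ysub by <:].
End Sub.

Section Comp.
Variables (R : pzRingType) (M X W : lmodType R) (f : {linear M -> X}) (g : X -> W)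
  (hg : hom_on (@fullsub R X) g).
Definition compf (m : M) : W := g (f m).
Lemma compf_lin : linear compf.
Proof. by move=> a x y; rewrite /compf linearP; apply: hg. Qed.
HB.instance Definition _ := GRing.isLinear.Build R M W *:%R compf compf_lin.
Definition compL : {linear M -> W} := compf.
Lemma compLE m : compL m = g (f m). Proof. by []. Qed.
End Comp.

Lemma yval_hom (R : pzRingType) (X : lmodType R) (Y : X -> Prop) (HY : is_submod Y) :
  hom_on (@fullsub R (@Ysub R X Y HY)) (@yval R X Y HY).
Proof. move=> a x y _ _; change (val (a *: x + y) = a *: val x + val y); by rewrite linearP. Qed.

Theorem proposition2p7 (R : pzRingType) (M X : lmodType R) :
  hom_nonzero_into M (@fullsub R X) ->
  M_prime_module M X ->
  beachy_M_prime M X.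
Proof.
move=> Hnz [_ [_ [_ Hp]]]; split=> // Y HY HYnz m; split; last first.
  by move=> Hm f _; apply: Hm.
move=> HmY f _.
pose N := @AnnM R M X Y.
have HN : is_submod N.
  split; first by move=> h _; rewrite linear0.
  by move=> a x y Hx Hy h hY; rewrite linearP Hx // Hy // scaler0 addr0.
have HNY : forall x, mdot N Y x -> x = 0.
  move=> x [Yx H].
  pose g := fun z : X => match pselect (Y z) with
    | left p => @YS R X Y HY z (asboolT p : Yb R X Y HY z) | right _ => 0 end.
  have hg : hom_on Y g.
    move=> a u v Yu Yv; rewrite /g.
    case: (pselect (Y (a *: u + v))) => [p|np]; last by case: np; case: (HY) => _; apply.
    case: (pselect (Y u)) => // pu; case: (pselect (Y v)) => // pv.
    apply: val_inj; rewrite /=; change (a *: u + v = a *: val (@YS R X Y HY u (asboolT pu : Yb R X Y HY u)) + val (@YS R X Y HY v (asboolT pv : Yb R X Y HY v))). by [].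
  have hN : forall (f0 : {linear M -> Ysub R X Y HY}) n, N n -> f0 n = 0.
    move=> f0 n Nn; apply: val_inj; rewrite raddf0.
    apply: (Nn (@compL _ _ _ _ f0 _ (@yval_hom _ _ _ HY))) => m'.
    by rewrite compLE; move: (@yP _ _ _ _ (f0 m')) => /asboolP.
  have := H _ g hg hN; rewrite /g; case: pselect => // p.
  move/(congr1 val) => /= ->; first [reflexivity | exact: (raddf0 (@yval _ _ _ HY))].
case: (Hp N Y HN HY HNY) => [HX|HY0].
  apply: HX; split=> // W g hg hN.
  rewrite -(@compLE _ _ _ _ f _ hg); apply: hN; exact: HmY.
exfalso; case: HYnz => f' [Hr [m' Hm']]; apply: Hm'; exact: HY0 _ (Hr m').
Qed.
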